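(* Let $G$ be a finite, simple, connected graph of order at least four with $\dim_{wt}(G)=2$, and let $\{u,v\}$ be a weak total metric basis of $G$. Then $u$ and $v$ are not twins in $G$. In fact, $G$ has no twin.
   Context: $d(x,y)$ is the shortest-path distance and $N(x)$ the set of neighbors of $x$. A set $W\subseteq V(G)$ is a resolving set if for every two distinct vertices $y,z$ there is $x\in W$ with $d(y,x)\ne d(z,x)$. A set $W$ is a weak total resolving set (WTR-set) if $W$ is resolving and, for every $w\in W$ and every $x\in V(G)\setminus W$, there is $w'\in W\setminus\{w\}$ with $d(x,w')\ne d(w,w')$. $\dim_{wt}(G)$ is the minimum cardinality of a WTR-set, and a weak total metric basis is a WTR-set of that cardinality. Two distinct vertices $u,v$ are twins if $N(u)\setminus\{v\}=N(v)\setminus\{u\}$; a vertex $u$ is a twin (and $G$ has a twin) if there exists $v\ne u$ such that $u,v$ are twins. *)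

(* Defs.v *)
From mathcomp Require Import all_boot.
Set Implicit Arguments. Unset Strict Implicit. Unset Printing Implicit Defensive.

Definition simple_graph (T : finType) (e : rel T) : Prop :=
  symmetric e /\ irreflexive e.

Definition connected_graph (T : finType) (e : rel T) : Prop :=
  forall x y : T, connect e x y.

Fixpoint walk_le (T : finType) (e : rel T) (n : nat) (x y : T) : bool :=
  match n with
  | 0 => x == y
  | k.+1 => walk_le e k x y || [exists z, walk_le e k x z && e z y]
  end.

(* shortest-path distance: least n with a walk of length <= n
   (in a connected graph this is < #|T|, so searching 0..#|T|-1 suffices;
   it equals #|T| iff y is unreachable from x) *)
Definition dist (T : finType) (e : rel T) (x y : T) : nat :=
  find (fun n => walk_le e n x y) (iota 0 #|T|).

Definition resolving (T : finType) (e : rel T) (W : {set T}) : Prop :=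
  forall y z : T, y != z -> exists2 x, x \in W & dist e y x != dist e z x.

Definition weak_total_resolving (T : finType) (e : rel T) (W : {set T}) : Prop :=
  resolving e W /\
  forall w x, w \in W -> x \notin W ->
    exists2 w', w' \in W :\ w & dist e x w' != dist e w w'.

Definition is_wt_dim (T : finType) (e : rel T) (k : nat) : Prop :=
  (exists W : {set T}, weak_total_resolving e W /\ #|W| = k) /\
  (forall W : {set T}, weak_total_resolving e W -> k <= #|W|).

Definition wt_metric_basis (T : finType) (e : rel T) (W : {set T}) : Prop :=
  weak_total_resolving e W /\
  (forall W' : {set T}, weak_total_resolving e W' -> #|W| <= #|W'|).

Definition nbhd (T : finType) (e : rel T) (x : T) : {set T} := [set y | e x y].

Definition twins (T : finType) (e : rel T) (u v : T) : Prop :=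
  u != v /\ nbhd e u :\ v = nbhd e v :\ u.

Definition is_twin (T : finType) (e : rel T) (u : T) : Prop :=
  exists v, twins e u v.

(* Main.v *)
Require Import Defs.
From mathcomp Require Import all_boot.
From mathcomp Require Import zify.

Section Dist.
Variables (T : finType) (e : rel T).

Lemma walk_mono n m x y : n <= m -> walk_le e n x y -> walk_le e m x y.
Proof.
elim: m => [|m IH]; first by rewrite leqn0 => /eqP->.
rewrite leq_eqVlt => /orP [/eqP-> //|]; rewrite ltnS => /IH H /H /= ->.
by [].
Qed.

Lemma walk_S n x y : walk_le e n x y -> walk_le e n.+1 x y.
Proof. by move=> H; apply/orP; left. Qed.

Lemma walk_cons n x z y : e x z -> walk_le e n z y -> walk_le e n.+1 x y.
Proof.
move=> exz; elim: n y => [|n IH] y.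
  move/eqP<-; apply/orP; right; apply/existsP; exists x; by rewrite /= eqxx exz.
move=> /orP [H | /existsP [w /andP [H ewy]]].
  exact: walk_S (IH y H).
apply/orP; right; apply/existsP; exists w; apply/andP; split; [exact: IH | exact: ewy].
Qed.

Hypothesis sym : symmetric e.

Lemma walk_sym n x y : walk_le e n x y -> walk_le e n y x.
Proof.
elim: n x y => [|n IH] x y; first by move=> /eqP->; exact: eqxx.
move=> /orP [/IH H | /existsP [z /andP [H ezy]]].
  exact: walk_S H.
apply: (walk_cons _ _ z); first by rewrite sym.
exact: IH.
Qed.

Lemma walk_head n x y : walk_le e n.+1 x y ->
  walk_le e n x y \/ exists2 z, e x z & walk_le e n z y.
Proof.
move=> /walk_sym /orP [/walk_sym H | /existsP [z /andP [H ezx]]]; first by left.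
right; exists z; first by rewrite sym.
exact: walk_sym.
Qed.

Lemma dist_le n x y : walk_le e n x y -> dist e x y <= n.
Proof.
rewrite /dist => W; case: (ltnP n #|T|) => Hn.
  rewrite leqNgt; apply/negP => /(before_find 0).
  by rewrite nth_iota // add0n W.
apply: leq_trans (find_size _ _) _; by rewrite size_iota.
Qed.

Hypothesis conn : connected_graph e.

Lemma dist_walk x y : walk_le e (dist e x y) x y.
Proof.
have [n [Hn W]] : exists n, n < #|T| /\ walk_le e n x y.
  move: (conn x y) => /connectP [p pth ->].
  case/shortenP: pth => p' pth' uq _.
  exists (size p'); split.
    have := max_card (mem (x :: p')).
    by rewrite (card_uniqP uq).
  clear uq; elim: p' x pth' => [|z q IH] x /=; first by move=> _; exact: eqxx.
  case/andP => exz pth; exact: walk_cons exz (IH _ pth).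
have Hhas : has (fun k => walk_le e k x y) (iota 0 #|T|).
  by apply/hasP; exists n; rewrite ?mem_iota.
have := nth_find 0 Hhas.
rewrite /dist nth_iota ?add0n //.
by move: Hhas; rewrite has_find size_iota.
Qed.

Lemma dist_sym x y : dist e x y = dist e y x.
Proof. by apply/eqP; rewrite eqn_leq !dist_le // walk_sym // dist_walk. Qed.

Lemma dist0 x y : dist e x y = 0 -> x = y.
Proof. by move=> H; have := dist_walk x y; rewrite H => /eqP. Qed.

Lemma distxx x : dist e x x = 0.
Proof. by apply/eqP; rewrite -leqn0; apply: dist_le; exact: eqxx. Qed.

Lemma twins_sym a b : twins e a b -> twins e b a.
Proof. by case=> H1 H2; split; rewrite // eq_sym. Qed.

Lemma twin_adj a b z : twins e a b -> z != b -> e a z -> e b z.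
Proof.
case=> _ H nzb eaz; have : z \in nbhd e a :\ b by rewrite /nbhd !inE nzb eaz.
by rewrite H /nbhd !inE => /andP [_ ->].
Qed.

Lemma walk_twin n x a b : twins e a b -> walk_le e n x a -> x != a -> walk_le e n x b.
Proof.
move=> tw; elim: n => [|n IH]; first by move=> /eqP-> ; rewrite eqxx.
move=> /orP [H | /existsP [z /andP [H eza]]] nxa.
  exact: walk_S (IH H nxa).
case: (eqVneq z b) => [zb | nzb].
  by subst z; exact: walk_S H.
apply/orP; right; apply/existsP; exists z; rewrite H /=.
by rewrite sym; apply: (twin_adj _ _ _ tw nzb); rewrite sym.
Qed.

Lemma dist_twin x a b : twins e a b -> x != a -> x != b -> dist e x a = dist e x b.
Proof.
move=> tw xa xb; rewrite /dist; apply: eq_find => n; apply/idP/idP => H.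
  exact: (walk_twin _ _ _ _ tw H xa).
exact: (walk_twin _ _ _ _ (twins_sym _ _ tw) H xb).
Qed.


Lemma core u v a b : u != v -> weak_total_resolving e [set u; v] ->
  twins e a b -> a = u -> 4 <= #|T| -> False.
Proof.
move=> uv [res wtr] tw au card4; subst a.
have ub : u != b by case: tw.
case: (eqVneq b v) => [bv | nbv]; last first.
  have bW : b \notin [set u; v] by rewrite !inE negb_or (eq_sym b u) ub nbv.
  have uW : u \in [set u; v] by rewrite !inE eqxx.
  case: (wtr u b uW bW) => w'; rewrite !inE => /andP [w'u /orP [/eqP w'e| /eqP w'e]].
    by rewrite w'e eqxx in w'u.
  subst w'; move=> H; move: H.
  rewrite (dist_sym b v) -(dist_twin v u b tw) ?(dist_sym v u) ?eqxx //.
  all: try by rewrite eq_sym.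
  idtac.
subst v.
pose out y := (y != u) && (y != b).
have F2 : forall y, out y -> dist e y u != dist e b u.
  move=> y /andP[yu yb].
  have bW : b \in [set u; b] by rewrite !inE eqxx orbT.
  have yW : y \notin [set u; b] by rewrite !inE negb_or yu yb.
  case: (wtr b y bW yW) => w'; rewrite !inE => /andP [w'b /orP [/eqP-> // | /eqP w'e]].
  by rewrite w'e eqxx in w'b.
have F1 : forall y z, out y -> out z -> y != z -> dist e y u != dist e z u.
  move=> y z /andP[yu yb] /andP[zu zb] yz.
  case: (res y z yz) => w; rewrite !inE => /orP [/eqP-> //| /eqP->].
  by rewrite -(dist_twin y u b) // -(dist_twin z u b).
have F0 : forall y, out y -> 0 < dist e y u.
  move=> y /andP[yu _]; rewrite lt0n; apply/eqP => /dist0 H.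
  by rewrite H eqxx in yu.
have F3 : forall k y, out y -> dist e y u = k.+2 -> exists2 z, out z & dist e z u = k.+1.
  move=> k y /andP[yu yb] dy.
  have := dist_walk y u; rewrite dy => /walk_head [H | [z eyz H]].
    by have := dist_le _ _ _ H; rewrite dy ltnn.
  have h1 := dist_le _ _ _ H.
  have h2 : k.+2 <= (dist e z u).+1.
    by rewrite -dy; apply: dist_le; exact: (walk_cons _ _ _ _ eyz (dist_walk z u)).
  have dz : dist e z u = k.+1 by lia.
  exists z => //; apply/andP; split.
    by apply/eqP => zu; rewrite zu distxx in dz.
  apply/eqP => zb; subst z.
  have := dist_le 1 y b (walk_cons 0 y b b eyz (eqxx b)).
  by rewrite -(dist_twin y u b) // dy.
have D1 : forall k y, out y -> dist e y u = k.+1 -> exists2 z, out z & dist e z u = 1.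
  elim=> [|k IH] y oy dy; first by exists y.
  by case: (F3 k y oy dy) => z oz dz; exact: IH oz dz.
have D2 : forall k y, out y -> dist e y u = k.+2 -> exists2 z, out z & dist e z u = 2.
  elim=> [|k IH] y oy dy; first by exists y.
  by case: (F3 k.+1 y oy dy) => z oz dz; exact: IH oz dz.
have : 1 < #|~: [set u; b]|.
  by have := cardsC [set u; b]; rewrite cards2 ub; lia.
case/card_gt1P => y [z [Hy Hz yz]].
have oy : out y by move: Hy; rewrite !inE negb_or.
have oz : out z by move: Hz; rewrite !inE negb_or.
have [x ox dx] : exists2 x, out x & 2 <= dist e x u.
  have := F1 y z oy oz yz; have := F0 y oy; have := F0 z oz.
  case: (eqVneq (dist e y u) 1) => [d1 | d1] h3 h4 h5.
    by exists z => //; move: h5; rewrite d1; lia.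
  by exists y => //; lia.
have [y2 oy2 d2] : exists2 z, out z & dist e z u = 2.
  by apply: (D2 (dist e x u - 2) x ox); lia.
have [y1 oy1 d1] : exists2 z, out z & dist e z u = 1.
  by apply: (D1 (dist e x u - 1) x ox); lia.
have ey1u : e y1 u.
  have := dist_walk y1 u; rewrite d1 => /(walk_head 0) [H | [z' ez' /eqP<- //]].
  by move: oy1; rewrite /out (eqP H) eqxx.
have eby1 : e b y1.
  apply: (twin_adj _ _ _ tw); first by case/andP: oy1.
  by rewrite sym.
have hb := dist_le 2 b u (walk_cons 1 b y1 u eby1 (walk_cons 0 y1 u u ey1u (eqxx u))).
have := F2 y1 oy1; have := F2 y2 oy2; rewrite d1 d2.
have : 0 < dist e b u.
  by rewrite lt0n; apply/eqP => /dist0 H; rewrite H eqxx in ub.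
lia.
Qed.

End Dist.

Theorem proposition4 (T : finType) (e : rel T) (u v : T) :
  simple_graph e -> connected_graph e -> 4 <= #|T| ->
  is_wt_dim e 2 -> u != v -> wt_metric_basis e [set u; v] ->
  ~ twins e u v /\ (forall x : T, ~ is_twin e x).
Proof.
move=> [sym irr] conn card4 _ uv [wtr _].
have vu : v != u by rewrite eq_sym.
have wtr' : weak_total_resolving e [set v; u] by rewrite setUC.
have notw : forall x t, ~ twins e x t.
  move=> x t tw; have xt : x != t by case: tw.
  case: (wtr) => res _.
  case: (res x t xt) => w Hw Hd.
  have : (w == x) || (w == t).
    apply/contraT; rewrite negb_or => /andP [wx wt]; move: Hd.
    rewrite (dist_sym _ _ sym conn x w) (dist_sym _ _ sym conn t w).
    by rewrite (dist_twin _ _ sym w x t tw) ?eqxx.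
  move: Hw; rewrite !inE => /orP [/eqP wu | /eqP wv] /orP [/eqP wx | /eqP wt].
  - exact: (core _ _ sym conn u v x t uv wtr tw (esym (etrans (esym wu) wx)) card4).
  - exact: (core _ _ sym conn u v t x uv wtr (twins_sym _ _ _ _ tw) (esym (etrans (esym wu) wt)) card4).
  - exact: (core _ _ sym conn v u x t vu wtr' tw (esym (etrans (esym wv) wx)) card4).
  - exact: (core _ _ sym conn v u t x vu wtr' (twins_sym _ _ _ _ tw) (esym (etrans (esym wv) wt)) card4).
split; [exact: notw | move=> x [t]; exact: notw].
Qed.
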